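(* Let $\lambda>0$, $\ell>0$, $a_1,a_2,a_3\in\mathbb{R}$, fix $z>0$, and consider the map $(x_0,y_0)\mapsto(x,y)$ given by $$x=x_0+\frac{\lambda z}{2\pi\ell}\left(a_1+2a_3\frac{x_0}{\ell}+2\frac{x_0y_0}{\ell^2}\right),\qquad y=y_0+\frac{\lambda z}{2\pi\ell}\left(a_2+\frac{3y_0^2+x_0^2}{\ell^2}\right).$$ Let $A\doteq a_3+\frac{2\pi\ell^2}{3\lambda z}$ and assume $A\neq0$. Then the set of caustic points of this map (points $(x,y)$ that are images of some $(x_0,y_0)$ at which the Jacobian determinant $\det\partial(x,y)/\partial(x_0,y_0)$ vanishes) is the union, over the two choices of sign, of the curves $\zeta\in\mathbb{R}\mapsto(x_c(\zeta),y_c(\zeta))$ with $$x_c(\zeta)=a_1\frac{\lambda z}{2\pi\ell}-\frac{\sqrt3\,\lambda z}{4\pi\ell}A^2\sinh(\zeta)\left[\cosh(\zeta)\pm1\right],$$ $$y_c(\zeta)=a_2\frac{\lambda z}{2\pi\ell}-\frac{\pi\ell^3}{6\lambda z}+\frac{3\lambda z}{4\pi\ell}A^2\cosh(\zeta)\left[\cosh(\zeta)\mp1\right].$$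
   Context: In the formulas for $x_c$ and $y_c$, the upper signs are taken together and the lower signs are taken together. *)

(* Defs.v *)
From Stdlib Require Import Reals.
From Coquelicot Require Import Coquelicot.
Open Scope R_scope.

Definition map_x (lam l a1 a3 z x0 y0 : R) : R :=
  x0 + (lam * z) / (2 * PI * l) * (a1 + 2 * a3 * (x0 / l) + 2 * (x0 * y0) / (l ^ 2)).

Definition map_y (lam l a2 z x0 y0 : R) : R :=
  y0 + (lam * z) / (2 * PI * l) * (a2 + (3 * y0 ^ 2 + x0 ^ 2) / (l ^ 2)).

Definition jac_det (lam l a1 a2 a3 z x0 y0 : R) : R :=
  Derive (fun t => map_x lam l a1 a3 z t y0) x0 *
  Derive (fun t => map_y lam l a2 z x0 t) y0 -
  Derive (fun t => map_x lam l a1 a3 z x0 t) y0 *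
  Derive (fun t => map_y lam l a2 z t y0) x0.

Definition Aconst (lam l a3 z : R) : R := a3 + 2 * PI * l ^ 2 / (3 * lam * z).

(* Caustic curves; s = 1 is the upper-sign curve, s = -1 the lower-sign one:
   x_c uses (cosh + s), y_c uses (cosh - s). *)
Definition x_c (lam l a1 a3 z s zeta : R) : R :=
  a1 * (lam * z) / (2 * PI * l)
  - sqrt 3 * lam * z / (4 * PI * l) * (Aconst lam l a3 z) ^ 2
    * sinh zeta * (cosh zeta + s).

Definition y_c (lam l a2 a3 z s zeta : R) : R :=
  a2 * (lam * z) / (2 * PI * l) - PI * l ^ 3 / (6 * lam * z)
  + 3 * lam * z / (4 * PI * l) * (Aconst lam l a3 z) ^ 2
    * cosh zeta * (cosh zeta - s).

(* Main.v *)
Require Import Defs.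
From Stdlib Require Import Reals Lra Psatz.
From Coquelicot Require Import Coquelicot.
Open Scope R_scope.

Lemma ch_sh (t : R) : cosh t ^ 2 = 1 + sinh t ^ 2 /\ 0 < cosh t.
Proof.
  unfold cosh, sinh.
  assert (H : exp t * exp (- t) = 1) by (rewrite <- exp_plus; replace (t + - t) with 0 by ring; apply exp_0).
  pose proof (exp_pos t); pose proof (exp_pos (- t)).
  split; [nra | lra].
Qed.

Lemma dx0 lam l a1 a3 z x0 y0 : l <> 0 ->
  Derive (fun t => map_x lam l a1 a3 z t y0) x0 =
  1 + lam * z / (2 * PI * l) * (2 * a3 / l + 2 * y0 / l ^ 2).
Proof.
  intros Hl. apply is_derive_unique. unfold map_x. auto_derive; [exact I|].
  field. pose proof PI_RGT_0. split; [auto|lra].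
Qed.

Lemma dxy lam l a1 a3 z x0 y0 : l <> 0 ->
  Derive (fun t => map_x lam l a1 a3 z x0 t) y0 =
  lam * z / (2 * PI * l) * (2 * x0 / l ^ 2).
Proof.
  intros Hl. apply is_derive_unique. unfold map_x. auto_derive; [exact I|].
  field. pose proof PI_RGT_0. split; [auto|lra].
Qed.

Lemma dyx lam l a2 z x0 y0 : l <> 0 ->
  Derive (fun t => map_y lam l a2 z t y0) x0 =
  lam * z / (2 * PI * l) * (2 * x0 / l ^ 2).
Proof.
  intros Hl. apply is_derive_unique. unfold map_y. auto_derive; [exact I|].
  field. pose proof PI_RGT_0. split; [auto|lra].
Qed.

Lemma dyy lam l a2 z x0 y0 : l <> 0 ->
  Derive (fun t => map_y lam l a2 z x0 t) y0 =
  1 + lam * z / (2 * PI * l) * (6 * y0 / l ^ 2).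
Proof.
  intros Hl. apply is_derive_unique. unfold map_y. auto_derive; [exact I|].
  field. pose proof PI_RGT_0. split; [auto|lra].
Qed.

Lemma jac_eq lam l a1 a2 a3 z x0 y0 : l <> 0 ->
  jac_det lam l a1 a2 a3 z x0 y0 =
  (1 + lam * z / (2 * PI * l) * (2 * a3 / l + 2 * y0 / l ^ 2)) *
  (1 + lam * z / (2 * PI * l) * (6 * y0 / l ^ 2)) -
  (lam * z / (2 * PI * l) * (2 * x0 / l ^ 2)) ^ 2.
Proof.
  intros Hl. unfold jac_det. rewrite dx0, dxy, dyx, dyy by auto. ring.
Qed.

Definition X0 (A l s t : R) := - s * (sqrt 3 / 2) * A * l * sinh t.
Definition Y0 (A lam l z s t : R) := - l ^ 2 / (6 * (lam * z / (2 * PI * l)))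
   + A * l / 2 * (s * cosh t - 1).

Lemma back lam l a1 a2 a3 z s t : 0 < lam -> 0 < l -> 0 < z -> (s = 1 \/ s = -1) ->
  let A := Aconst lam l a3 z in
  map_x lam l a1 a3 z (X0 A l s t) (Y0 A lam l z s t) = x_c lam l a1 a3 z s t /\
  map_y lam l a2 z (X0 A l s t) (Y0 A lam l z s t) = y_c lam l a2 a3 z s t /\
  jac_det lam l a1 a2 a3 z (X0 A l s t) (Y0 A lam l z s t) = 0.
Proof.
  intros Hlam Hl Hz Hs A.
  pose proof PI_RGT_0 as Hpi.
  assert (Hs2 : s * s = 1) by (destruct Hs; subst; ring).
  destruct (ch_sh t) as [Hc _].
  assert (H3 : sqrt 3 * sqrt 3 = 3) by (apply sqrt_sqrt; lra).
  assert (Hsq : (X0 A l s t) ^ 2 = 3 / 4 * A ^ 2 * l ^ 2 * (cosh t ^ 2 - 1)).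
  { unfold X0. replace (cosh t ^ 2 - 1) with (sinh t ^ 2) by lra.
    transitivity ((s * s) * (sqrt 3 * sqrt 3) / 4 * A ^ 2 * l ^ 2 * sinh t ^ 2).
    - field.
    - rewrite Hs2, H3. field. }
  unfold x_c, y_c. fold A.
  assert (Ha3 : a3 = A - 2 * PI * l ^ 2 / (3 * lam * z)) by (unfold A, Aconst; ring).
  clearbody A. subst a3.
  split; [|split].
  - unfold map_x, X0, Y0. destruct Hs as [-> | ->]; field; repeat split; lra.
  - unfold map_y. set (u := X0 A l s t) in *. rewrite Hsq. unfold Y0.
    destruct Hs as [-> | ->]; field; repeat split; lra.
  - rewrite jac_eq by lra. set (u := X0 A l s t) in *.
    replace ((lam * z / (2 * PI * l) * (2 * u / l ^ 2)) ^ 2) with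
      ((lam * z / (2 * PI * l))^2 * 4 / l^4 * u ^ 2) by (field; lra).
    rewrite Hsq. unfold Y0.
    destruct Hs as [-> | ->]; field; repeat split; lra.
Qed.

Theorem mainTheorem7 (lam l a1 a2 a3 z : R) :
  0 < lam -> 0 < l -> 0 < z -> Aconst lam l a3 z <> 0 ->
  forall x y : R,
    (exists x0 y0 : R,
        map_x lam l a1 a3 z x0 y0 = x /\ map_y lam l a2 z x0 y0 = y /\
        jac_det lam l a1 a2 a3 z x0 y0 = 0)
    <->
    (exists s zeta : R, (s = 1 \/ s = -1) /\
        x = x_c lam l a1 a3 z s zeta /\ y = y_c lam l a2 a3 z s zeta).
Proof.
  intros Hlam Hl Hz HA x y. split.
  - intros [x0 [y0 [Hx [Hy Hd]]]].
    pose proof PI_RGT_0 as Hpi.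
    assert (H3 : sqrt 3 * sqrt 3 = 3) by (apply sqrt_sqrt; lra).
    assert (H3p : 0 < sqrt 3) by (apply sqrt_lt_R0; lra).
    set (A := Aconst lam l a3 z) in *.
    set (c := lam * z / (2 * PI * l)).
    assert (Hc : 0 < c) by (unfold c; apply Rdiv_lt_0_compat; [nra|nra]).
    set (q := 2 / (A * l) * (y0 + l ^ 2 / (6 * c)) + 1).
    set (r := 2 * x0 / (sqrt 3 * A * l)).
    assert (Hr2 : r ^ 2 = 4 * x0 ^ 2 / (3 * A ^ 2 * l ^ 2)).
    { unfold r. transitivity (4 * x0 ^ 2 / ((sqrt 3 * sqrt 3) * A ^ 2 * l ^ 2)).
      - field. repeat split; lra.
      - rewrite H3. reflexivity. }
    assert (Ha3 : a3 = A - 2 * PI * l ^ 2 / (3 * lam * z)) by (unfold A, Aconst; ring).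
    assert (Hq : q ^ 2 = 1 + r ^ 2).
    { rewrite jac_eq in Hd by lra. rewrite Ha3 in Hd.
      assert (E : 3 * c ^ 2 * A ^ 2 / l ^ 2 * (q ^ 2 - 1 - r ^ 2) = 0).
      { rewrite Hr2. rewrite <- Hd. unfold q, c. field. repeat split; lra. }
      assert (P : 0 < 3 * c ^ 2 * A ^ 2 / l ^ 2).
      { pose proof (Rsqr_pos_lt A HA) as HA2. unfold Rsqr in HA2.
        apply Rdiv_lt_0_compat; [apply Rmult_lt_0_compat; [apply Rmult_lt_0_compat; [lra| apply pow_lt; lra] | simpl; lra] | apply pow_lt; lra]. }
      apply Rmult_integral in E. destruct E as [E|E]; lra. }
    set (s := if Rle_dec 0 q then 1 else -1).
    assert (Hs : s = 1 \/ s = -1) by (unfold s; destruct Rle_dec; auto).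
    assert (Hsq : 0 <= s * q) by (unfold s; destruct Rle_dec; lra).
    assert (Hs2 : s * s = 1) by (destruct Hs as [-> | ->]; ring).
    set (zeta := arcsinh (- s * r)).
    assert (Hsh : sinh zeta = - s * r) by apply sinh_arcsinh.
    destruct (ch_sh zeta) as [Hch Hpos].
    assert (Hcosh : cosh zeta = s * q).
    { rewrite Hsh in Hch.
      assert (cosh zeta ^ 2 = (s * q) ^ 2).
      { rewrite Hch. replace ((- s * r) ^ 2) with ((s*s) * r ^ 2) by ring.
        replace ((s * q) ^ 2) with ((s*s) * q ^ 2) by ring. rewrite Hs2, Hq. ring. }
      nra. }
    assert (Ex : x0 = X0 A l s zeta).
    { unfold X0. rewrite Hsh. unfold r.
      transitivity ((s * s) * x0); [rewrite Hs2; ring|]. field. repeat split; lra. }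
    assert (Ey : y0 = Y0 A lam l z s zeta).
    { unfold Y0. rewrite Hcosh. fold c.
      replace (s * (s * q)) with ((s*s) * q) by ring. rewrite Hs2. unfold q. field.
      repeat split; lra. }
    exists s, zeta. split; [exact Hs|].
    destruct (back lam l a1 a2 a3 z s zeta Hlam Hl Hz Hs) as [B1 [B2 _]].
    fold A in B1, B2. rewrite <- Ex, <- Ey in B1, B2.
    split; [rewrite <- Hx; exact B1 | rewrite <- Hy; exact B2].
  - intros [s [zeta [Hs [Hx Hy]]]].
    destruct (back lam l a1 a2 a3 z s zeta Hlam Hl Hz Hs) as [B1 [B2 B3]].
    eexists; eexists; split; [exact (eq_trans B1 (eq_sym Hx))|].
    split; [exact (eq_trans B2 (eq_sym Hy)) | exact B3].
Qed.
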